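(* Let $1\le k\le d$ and $\alpha\ge1$. Let $P_1,\dots,P_m\subset\mathbb{R}^d$ be an arbitrary collection of finite point sets, and for each $i$ let $c(P_i)\subseteq P_i$ be an $\alpha$-approximate core-set for the $k$-directional height of $P_i$. Then $$\mathrm{MAXDET}_k\Big(\bigcup_{i=1}^m P_i\Big)\le \alpha^{2k}\cdot\mathrm{MAXDET}_k\Big(\bigcup_{i=1}^m c(P_i)\Big).$$
   Context: For a finite set $S\subset\mathbb{R}^d$ with $|S|=k$, let $M_S$ be the $k\times d$ matrix whose rows are the points of $S$. For finite $P\subset\mathbb{R}^d$, $\mathrm{MAXDET}_k(P)=\max_{S\subseteq P,\,|S|=k}\det(M_SM_S^\top)$. Let $\mathcal{H}_{k-1}$ be the set of all $(k-1)$-dimensional linear subspaces of $\mathbb{R}^d$, and $\mathrm{dist}(p,\mathcal{H})$ the Euclidean distance from point $p$ to subspace $\mathcal{H}$. The $k$-directional height of a point set $P$ with respect to $\mathcal{H}\in\mathcal{H}_{k-1}$ is $h(P,\mathcal{H})=\max_{p\in P}\mathrm{dist}(p,\mathcal{H})$. A subset $C\subseteq P$ is an $\alpha$-approximate core-set for the $k$-directional height of $P$ if $h(C,\mathcal{H})\ge h(P,\mathcal{H})/\alpha$ for every $\mathcal{H}\in\mathcal{H}_{k-1}$. *)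

(* Defs.v *)
From HB Require Import structures.
From mathcomp Require Import all_boot all_order all_algebra.
From mathcomp Require Import finmap.
From mathcomp Require Import reals.
Set Implicit Arguments. Unset Strict Implicit. Unset Printing Implicit Defensive.
Import Order.TTheory GRing.Theory Num.Theory.
Local Open Scope ring_scope.

Definition enorm {R : realType} {d : nat} (v : 'rV[R]_d) : R :=
  Num.sqrt (\sum_(j < d) (v 0 j) ^+ 2).

(* The linear subspace H of R^d is the row space of a d x d matrix Hm;
   its dimension is \rank Hm. *)
Definition dist_sub {R : realType} {d : nat} (p : 'rV[R]_d) (Hm : 'M[R]_d) : R :=
  inf (fun r : R => exists q : 'rV[R]_d, (q <= Hm)%MS /\ r = enorm (p - q)).

Definition height {R : realType} {d : nat} (P : {fset 'rV[R]_d}) (Hm : 'M[R]_d) : R :=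
  \big[Num.max/0]_(p : P) dist_sub (val p) Hm.

Definition coreset {R : realType} {d : nat} (alpha : R) (k : nat)
    (P C : {fset 'rV[R]_d}) : Prop :=
  (C `<=` P)%fset /\
  forall Hm : 'M[R]_d, \rank Hm = k.-1 -> height P Hm / alpha <= height C Hm.

Definition ptmx {R : realType} {d k : nat} (P : {fset 'rV[R]_d})
    (f : {ffun 'I_k -> P}) : 'M[R]_(k, d) :=
  \matrix_(i < k, j < d) (val (f i)) 0 j.

(* MAXDET_k(P): max over k-element subsets S of P (enumerated as injective
   k-tuples of points of P; det(M_S M_S^T) does not depend on the ordering)
   of det(M_S M_S^T); convention 0 if |P| < k. *)
Definition maxdet {R : realType} {d : nat} (k : nat) (P : {fset 'rV[R]_d}) : R :=
  \big[Num.max/0]_(f : {ffun 'I_k -> P} | injectiveb f)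
     \det (ptmx f *m (ptmx f)^T).

(* Main.v *)
Require Import Defs.
From HB Require Import structures.
From mathcomp Require Import all_boot all_order all_algebra.
From mathcomp Require Import finmap.
From mathcomp Require Import reals.
From mathcomp Require Import ring lra.
Set Implicit Arguments. Unset Strict Implicit. Unset Printing Implicit Defensive.
Import Order.TTheory GRing.Theory Num.Theory.
Local Open Scope ring_scope.

Section Aux.
Variables (R : realType) (d : nat).

Definition sqn (v : 'rV[R]_d) : R := (v *m v^T) 0 0.

Lemma sqnE v : sqn v = \sum_(j < d) (v 0 j) ^+ 2.
Proof. by rewrite /sqn mxE; apply: eq_bigr => j _; rewrite mxE expr2. Qed.

Lemma sqn_ge0 v : 0 <= sqn v.
Proof. by rewrite sqnE; apply: sumr_ge0 => j _; apply: sqr_ge0. Qed.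

Lemma enorm_sq v : enorm v ^+ 2 = sqn v.
Proof. by rewrite /enorm -sqnE sqr_sqrtr // sqn_ge0. Qed.

Lemma enorm_ge0 (v : 'rV[R]_d) : 0 <= enorm v.
Proof. exact: sqrtr_ge0. Qed.

Lemma sqn_eq0 v : sqn v = 0 -> v = 0.
Proof.
rewrite sqnE => /psumr_eq0P H; apply/rowP => j; rewrite mxE.
by apply/eqP; rewrite -sqrf_eq0; apply/eqP; apply: H => // i _; apply: sqr_ge0.
Qed.

Lemma enorm_le v w : sqn v <= sqn w -> enorm v <= enorm w.
Proof. by move=> h; rewrite /enorm -!sqnE ler_sqrt // sqn_ge0. Qed.

Lemma detgram0 k (M : 'M[R]_(k, d)) (x : 'rV_k) :
  x != 0 -> x *m M = 0 -> \det (M *m M^T) = 0.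
Proof.
move=> nx xM; apply/eqP/det0P; exists x => //.
by rewrite mulmxA xM mul0mx.
Qed.

Definition ext n (j : 'I_n.+1) (w : 'rV[R]_n) : 'rV[R]_n.+1 :=
  \row_i (match unlift j i with Some a => w 0 a | None => 0 end).

Lemma ext_lift n (j : 'I_n.+1) w a : ext j w 0 (lift j a) = w 0 a.
Proof. by rewrite mxE liftK. Qed.

Lemma ext_j n (j : 'I_n.+1) w : ext j w 0 j = 0.
Proof. by rewrite mxE unlift_none. Qed.

Lemma ext_mul n p (j : 'I_n.+1) w (M : 'M[R]_(n.+1, p)) :
  ext j w *m M = w *m row' j M.
Proof.
apply/rowP => l; rewrite !mxE (bigD1_ord j) //= ext_j mul0r add0r.
by apply: eq_bigr => a _; rewrite ext_lift !mxE.
Qed.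

Lemma ext_neq0 n (j : 'I_n.+1) w : w != 0 -> ext j w != 0.
Proof.
apply: contraNN => /eqP h; apply/eqP/rowP => a.
by rewrite -(ext_lift j) h !mxE.
Qed.

Lemma gram_unit n (M : 'M[R]_(n.+1, d)) (j : 'I_n.+1) :
  \det (M *m M^T) != 0 -> row' j M *m (row' j M)^T \in unitmx.
Proof.
move=> hM; rewrite unitmxE unitfE; apply/negP => /det0P [v nv vA].
have vA0 : v *m row' j M = 0.
  apply: sqn_eq0; rewrite /sqn trmx_mul mulmxA -(mulmxA v) vA mul0mx mxE.
  by [].
by move/eqP: hM; apply; apply: (detgram0 (ext_neq0 j nv)); rewrite ext_mul.
Qed.


Lemma sqnD_orth (r s : 'rV[R]_d) : r *m s^T = 0 -> sqn (r + s) = sqn r + sqn s.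
Proof.
move=> h; have h2 : s *m r^T = 0 by rewrite -(trmxK s) -trmx_mul h trmx0.
by rewrite /sqn raddfD /= mulmxDl !mulmxDr h h2 !mxE !addr0 add0r.
Qed.

Lemma row'col'_gram n p (j : 'I_n.+1) (M : 'M[R]_(n.+1, p)) :
  row' j (col' j (M *m M^T)) = row' j M *m (row' j M)^T.
Proof.
apply/matrixP => a b; rewrite !mxE; apply: eq_bigr => l _; by rewrite !mxE.
Qed.

Section Proj.
Variables (n : nat) (j : 'I_n.+1) (M : 'M[R]_(n.+1, d)).

Definition repl (v : 'rV[R]_d) : 'M[R]_(n.+1, d) :=
  \matrix_(i, l) if i == j then v 0 l else M i l.

Lemma row'_repl v : row' j (repl v) = row' j M.
Proof. by apply/matrixP => a l; rewrite !mxE eq_sym (negbTE (neq_lift j a)). Qed.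

Let A := row' j M.
Definition proj (p : 'rV[R]_d) := p - p *m A^T *m invmx (A *m A^T) *m A.

Hypothesis hA : A *m A^T \in unitmx.

Lemma proj_perp p : proj p *m A^T = 0.
Proof.
by rewrite /proj mulmxBl -!mulmxA mulVmx // mulmx1 subrr.
Qed.

Lemma det_repl p : \det (repl p *m (repl p)^T) = \det (A *m A^T) * sqn (proj p).
Proof.
set r := proj p; set w := p *m A^T *m invmx (A *m A^T).
set U : 'M[R]_(n.+1) := 1%:M + delta_mx j 0 *m ext j w.
have hU : repl p = U *m repl r.
  rewrite mulmxDl mul1mx -mulmxA ext_mul row'_repl.
  apply/matrixP => i l; rewrite !mxE big_ord1 !mxE.
  case: (i == j); last by rewrite mul0r addr0.
  by rewrite mul1r /r /proj subrK.
have dU : \det U = 1.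
  rewrite (expand_det_col U j) (bigD1 j) //= big1 => [|i nij]; last first.
    by rewrite !mxE big_ord1 !mxE (negbTE nij) mul0r addr0 mul0r.
  rewrite addr0 !mxE big_ord1 !mxE eqxx unlift_none mulr0 addr0 mul1r /cofactor.
  rewrite -signr_odd addnn odd_double expr0 mul1r.
  rewrite [row' _ _](_ : _ = 1%:M) ?det1 //; apply/matrixP => a b.
  rewrite !mxE big_ord1 !mxE (inj_eq (@lift_inj _ j)) (eq_sym (lift j a)) (negbTE (neq_lift j a)).
  by rewrite mul0r addr0.
rewrite hU trmx_mul !mulmxA -(mulmxA U) !det_mulmx det_tr dU mul1r mulr1.
rewrite (expand_det_row _ j) (bigD1 j) //= big1 => [|i nij]; last first.
  case: (unliftP j i) nij => [a ->|->]; last by rewrite eqxx.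
  move=> _; rewrite [X in X * _](_ : _ = (proj p *m A^T) 0 a).
    by rewrite proj_perp mxE mul0r.
  rewrite !mxE; apply: eq_bigr => l _.
  by rewrite !mxE eqxx (eq_sym (lift j a)) (negbTE (neq_lift j a)).
rewrite addr0 /cofactor -signr_odd addnn odd_double expr0 mul1r.
rewrite row'col'_gram row'_repl mulrC; congr (_ * _).
by rewrite /sqn !mxE; apply: eq_bigr => l _; rewrite !mxE eqxx.
Qed.

Lemma dist_proj p : dist_sub p (<<A>>%MS) = enorm (proj p).
Proof.
have Ew : exists q : 'rV[R]_d, (q <= <<A>>)%MS /\ enorm (proj p) = enorm (p - q).
  by exists (p *m A^T *m invmx (A *m A^T) *m A); rewrite genmxE submxMl.
apply/le_anti/andP; split.
  apply: ge_inf => //; exists 0 => y [q [_ ->]]; exact: enorm_ge0.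
apply: lb_le_inf; first by exists (enorm (proj p)).
move=> y [q [+ ->]]; rewrite genmxE => /submxP [D ->]; apply: enorm_le.
have -> : p - D *m A = proj p + (p *m A^T *m invmx (A *m A^T) - D) *m A.
  by rewrite /proj mulmxBl addrA subrK.
rewrite sqnD_orth; first by rewrite lerDl sqn_ge0.
by rewrite trmx_mul mulmxA proj_perp mul0mx.
Qed.

End Proj.
End Aux.
Section Main.
Variables (R : realType) (d : nat).

Definition gmx k (g : 'I_k -> 'rV[R]_d) : 'M[R]_(k, d) := \matrix_(i, l) g i 0 l.
Definition gdet k (g : 'I_k -> 'rV[R]_d) : R := \det (gmx g *m (gmx g)^T).
Definition upd k (g : 'I_k -> 'rV[R]_d) j q := fun i => if i == j then q else g i.

Lemma gmx_upd n (g : 'I_n.+1 -> 'rV[R]_d) j q : gmx (upd g j q) = repl j (gmx g) q.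
Proof. by apply/matrixP => i l; rewrite !mxE /upd; case: (i == j). Qed.

Lemma gmx_self n (g : 'I_n.+1 -> 'rV[R]_d) j : repl j (gmx g) (g j) = gmx g.
Proof. by apply/matrixP => i l; rewrite !mxE; case: eqP => [->|]. Qed.

Lemma row_gmx k (g : 'I_k -> 'rV[R]_d) i : row i (gmx g) = g i.
Proof. by apply/rowP => l; rewrite !mxE. Qed.

Lemma le_height (P : {fset 'rV[R]_d}) H p : p \in P -> dist_sub p H <= height P H.
Proof. by move=> hp; rewrite /height (bigD1 [` hp]%fset) //= le_max lexx. Qed.

Lemma height_arg (C : {fset 'rV[R]_d}) H :
  height C H <= 0 \/ exists2 q, q \in C & height C H <= dist_sub q H.
Proof.
rewrite /height; apply: (big_ind (fun x => x <= 0 \/ exists2 q, q \in C & x <= dist_sub q H)).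
- by left.
- by move=> x y hx hy; have [hxy|hxy] := leP x y.
- by move=> x _; right; exists (val x) => //; exact: fsvalP.
Qed.

Lemma step (alpha : R) (halpha : 1 <= alpha) n (P C : {fset 'rV[R]_d})
  (hc : coreset alpha n.+1 P C) (g : 'I_n.+1 -> 'rV[R]_d) j :
  g j \in P -> 0 < gdet g -> exists q, q \in C /\ gdet g <= alpha ^+ 2 * gdet (upd g j q).
Proof.
move=> hp hpos.
set M := gmx g; set A := row' j M.
have hu : A *m A^T \in unitmx by apply: gram_unit; rewrite lt0r_neq0.
have e1 : gdet g = \det (A *m A^T) * sqn (proj j M (g j)).
  by have := det_repl hu (g j); rewrite gmx_self.
have e2 : forall q, gdet (upd g j q) = \det (A *m A^T) * sqn (proj j M q).
  by move=> q; rewrite /gdet gmx_upd det_repl.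
have Gpos : 0 < \det (A *m A^T).
  rewrite ltNge; apply/negP => hle.
  have := mulr_le0_ge0 hle (sqn_ge0 (proj j M (g j))).
  by rewrite -e1 leNgt hpos.
have hrank : \rank (<<A>>%MS) = n.+1.-1.
  rewrite genmxE; apply/eqP; rewrite eqn_leq rank_leq_row /=.
  by have := mxrankM_maxl A A^T; rewrite (mxrank_unit hu).
have hcor := hc.2 _ hrank.
have hdp := le_height (<<A>>%MS) hp; rewrite dist_proj // in hdp.
have a0 : 0 < alpha by apply: lt_le_trans halpha; exact: ltr01.
have hPC : height P (<<A>>%MS) <= alpha * height C (<<A>>%MS).
  by rewrite -ler_pdivrMl // mulrC.
have en0 := enorm_ge0 (proj j M (g j)).
case: (height_arg C (<<A>>%MS)) => [h0|[q hq hqd]].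
  have : enorm (proj j M (g j)) = 0.
    apply/le_anti; rewrite en0 andbT (le_trans hdp) // (le_trans hPC) //.
    by rewrite pmulr_rle0.
  move=> /(congr1 (fun x => x ^+ 2)); rewrite enorm_sq expr0n /= => hs.
  by move: hpos; rewrite e1 hs mulr0 ltxx.
exists q; split => //.
rewrite dist_proj // in hqd.
have hle : enorm (proj j M (g j)) <= alpha * enorm (proj j M q).
  by rewrite (le_trans hdp) // (le_trans hPC) // ler_pM2l.
have hsq : sqn (proj j M (g j)) <= alpha ^+ 2 * sqn (proj j M q).
  rewrite -!enorm_sq -exprMn; apply: lerXn2r => //; rewrite ?nnegrE //.
  by rewrite mulr_ge0 ?enorm_ge0 // ltW.
by rewrite e1 e2 mulrCA ler_pM2l.
Qed.

End Main.

Lemma maxdet_ge0 (R : realType) (d k : nat) (P : {fset 'rV[R]_d}) : 0 <= maxdet k P.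
Proof.
rewrite /maxdet; elim/big_rec: _ => // f x _ hx.
by rewrite le_max hx orbT.
Qed.

Lemma gdet_pos_inj (R : realType) (d n : nat) (g : 'I_n.+1 -> 'rV[R]_d) :
  0 < gdet g -> injective g.
Proof.
move=> hpos a b e; case: (eqVneq a b) => // nab; exfalso.
have : gdet g = 0.
  apply: (detgram0 (x := delta_mx 0 a - delta_mx 0 b)).
    apply/eqP => /rowP /(_ a); rewrite !mxE eqxx (negbTE nab) /=.
    by rewrite eqxx subr0 => /eqP; rewrite oner_eq0.
  by rewrite mulmxBl -!rowE !row_gmx e subrr.
by move=> h; move: hpos; rewrite h ltxx.
Qed.

Theorem lemma3p3 (R : realType) (d k m : nat) (alpha : R)
    (hk1 : (1 <= k)%N) (hkd : (k <= d)%N) (halpha : 1 <= alpha)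
    (P c : 'I_m -> {fset 'rV[R]_d})
    (hc : forall i : 'I_m, coreset alpha k (P i) (c i)) :
  maxdet k (\bigcup_(i <- enum 'I_m) P i)%fset
    <= alpha ^+ (2 * k) * maxdet k (\bigcup_(i <- enum 'I_m) c i)%fset.
Proof.
case: k hk1 hkd hc => [//|n] _ _ hc.
set UP := (\bigcup_(i <- enum 'I_m) P i)%fset.
set Uc := (\bigcup_(i <- enum 'I_m) c i)%fset.
have a0 : 0 <= alpha by apply: le_trans halpha; exact: ler01.
have RHS0 : 0 <= alpha ^+ (2 * n.+1) * maxdet n.+1 Uc.
  by rewrite mulr_ge0 ?exprn_ge0 ?maxdet_ge0.
have hsub : forall x, x \in Uc -> x \in UP.
  move=> x /bigfcupP [i hi hx]; apply/bigfcupP; exists i => //.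
  by move: hx; apply/fsubsetP; exact: (hc i).1.
have key : forall g : 'I_n.+1 -> 'rV[R]_d, (forall i, g i \in UP) -> 0 < gdet g ->
    gdet g <= alpha ^+ (2 * n.+1) * maxdet n.+1 Uc.
  move=> g hg gpos.
  have posof : forall t (g' : 'I_n.+1 -> 'rV[R]_d),
      gdet g <= alpha ^+ (2 * t) * gdet g' -> 0 < gdet g'.
    move=> t g' h; rewrite ltNge; apply/negP => hle.
    have := mulr_ge0_le0 (exprn_ge0 (2 * t) a0) hle.
    by move=> h2; move: gpos; rewrite ltNge (le_trans h h2).
  have inv : forall t, (t <= n.+1)%N -> exists g' : 'I_n.+1 -> 'rV[R]_d,
      [/\ forall i, g' i \in UP, forall i : 'I_n.+1, (i < t)%N -> g' i \in Uc
        & gdet g <= alpha ^+ (2 * t) * gdet g'].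
    elim => [_ | t IH ht].
      by exists g; split => //; rewrite muln0 expr0 mul1r.
    have [g' [h1 h2 h3]] := IH (ltnW ht).
    set j : 'I_n.+1 := Ordinal ht.
    have gp' := posof _ _ h3.
    have /bigfcupP [i0 _ hi0] := h1 j.
    have [q [hq hdet]] := step halpha (hc i0) hi0 gp'.
    have qUc : q \in Uc by apply/bigfcupP; exists i0 => //; rewrite mem_enum.
    exists (upd g' j q); split.
    - by move=> i; rewrite /upd; case: (i == j) => //; apply: hsub.
    - move=> i hi; rewrite /upd; case: eqP => [_ //|ne]; apply: h2.
      have : val i != t by apply/eqP => e; apply: ne; apply: val_inj.
      by move=> h; rewrite ltn_neqAle h -ltnS.
    - apply: (le_trans h3); rewrite mulnS exprD (mulrC (alpha ^+ 2)) -mulrA.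
      by apply: ler_wpM2l => //; exact: exprn_ge0.
  have [g' [_ h2 h3]] := inv n.+1 (leqnn _).
  have hin : forall i, g' i \in Uc := fun i => h2 i (ltn_ord i).
  have gp' := posof _ _ h3.
  have ginj := gdet_pos_inj gp'.
  pose f' : {ffun 'I_n.+1 -> Uc} := [ffun i => [` hin i]%fset].
  have ptm : ptmx f' = gmx g' by apply/matrixP => a b; rewrite !mxE ffunE.
  apply: (le_trans h3); apply: ler_wpM2l; first exact: exprn_ge0.
  rewrite /maxdet (bigD1 f') /=; first by rewrite ptm le_max lexx.
  apply/injectiveP => a b /(congr1 val); rewrite !ffunE /=; exact: ginj.
rewrite {1}/maxdet; apply: (big_ind (fun x => x <= _)) => //.
  by move=> x y hx hy; rewrite ge_max hx hy.
move=> f _.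
have hf : forall i, val (f i) \in UP by move=> i; exact: fsvalP.
case: (ltP 0 (gdet (fun i => val (f i)))) => h.
  exact: (key _ hf h).
exact: (le_trans h RHS0).
Qed.
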